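(* Let $\Gamma$ be a balanced two-dimensional simplicial complex, and let $W\subseteq V(\Gamma)$ be such that $\tilde H_2(\Gamma[W];\mathbf{k})\neq 0$ but $\tilde H_2(\Gamma[W'];\mathbf{k})=0$ for every proper subset $W'\subsetneq W$. Then $f_2(\Gamma[W])\ge 2|W|-4$.
   Context: A simplicial complex $\Gamma$ on a finite vertex set $V=V(\Gamma)$ is a family of subsets of $V$ (faces) closed under taking subsets; its dimension is $\max\{|F|:F\in\Gamma\}-1$; $f_2$ counts faces with 3 elements. For $W\subseteq V$, $\Gamma[W]=\{F\in\Gamma:F\subseteq W\}$. A two-dimensional complex is balanced if its vertex set can be partitioned into three sets $V_1,V_2,V_3$ such that every face contains at most one vertex from each $V_j$. Fix a field $\mathbf{k}$; $\tilde H_j(\cdot;\mathbf{k})$ is reduced simplicial homology. *)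

(* Defs.v *)
From HB Require Import structures.
From mathcomp Require Import all_boot all_order all_algebra.
Set Implicit Arguments. Unset Strict Implicit. Unset Printing Implicit Defensive.
Import GRing.Theory.
Local Open Scope ring_scope.

Section Simplicial.
Variable T : finType.

Definition is_complex (G : {set {set T}}) : Prop :=
  forall F H : {set T}, F \in G -> H \subset F -> H \in G.

(* dimension = max face size - 1 ; dimension 2 means max face size is 3 *)
Definition is_two_dim (G : {set {set T}}) : Prop :=
  (exists2 F, F \in G & #|F| = 3%N) /\ (forall F, F \in G -> (#|F| <= 3)%N).

(* balanced: partition V into V_1,V_2,V_3 (colour classes of c) such that
   every face contains at most one vertex of each class *)
Definition balanced (G : {set {set T}}) : Prop :=
  exists c : T -> 'I_3, forall F, F \in G -> {in F &, injective c}.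

Definition induced (G : {set {set T}}) (W : {set T}) : {set {set T}} :=
  [set F in G | F \subset W].

Definition f2 (G : {set {set T}}) : nat := #|[set F in G | #|F| == 3%N]|.

(* Chains are row vectors
   indexed by all subsets of T (via enum_rank); the j-chains are spanned by
   the faces with j+1 elements (the empty face gives the augmentation).
   Orientation: vertices are ordered by enum_rank. *)
Definition NS := #|{set T}|.

(* row space = span of the faces of G with exactly s elements *)
Definition chains (k : fieldType) (G : {set {set T}}) (s : nat) : 'M[k]_(NS, NS) :=
  \matrix_(i, j) (if (i == j) && (enum_val i \in G) && (#|enum_val i| == s)
                  then 1 else 0).

Definition bcoef (k : fieldType) (sg tau : {set T}) : k :=
  \sum_(v in sg | tau == sg :\ v)
     (-1) ^+ #|[set u in sg | (enum_rank u < enum_rank v)%N]|.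

(* boundary map acting on row vectors: c |-> c *m bdry *)
Definition bdry (k : fieldType) : 'M[k]_(NS, NS) :=
  \matrix_(i, j) bcoef k (enum_val i) (enum_val j).

(* \tilde H_d(G; k) <> 0 : the d-cycles are not all d-boundaries
   (d-faces have d+1 elements). *)
Definition red_homology_nonzero (k : fieldType) (G : {set {set T}}) (d : nat) : bool :=
  ~~ ((chains k G d.+1 :&: kermx (bdry k)) <= chains k G d.+2 *m bdry k)%MS.

End Simplicial.

(* Main.v *)
Require Import Defs.
From HB Require Import structures.
From mathcomp Require Import all_boot all_order all_algebra.
From Stdlib Require Import Lia.
Set Implicit Arguments. Unset Strict Implicit. Unset Printing Implicit Defensive.
Import GRing.Theory.
Local Open Scope ring_scope.

Lemma rank_lb (k : fieldType) m n (A : 'M[k]_(m,n)) :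
  (forall a : 'rV_m, a *m A = 0 -> (exists i, a 0 i = 0) -> a = 0) ->
  (m <= \rank A + 1)%N.
Proof.
case: m A => [|m] A H; first done.
pose P : 'M[k]_(m.+1,1) := col ord0 1%:M.
have h0 : ((kermx A :&: kermx P)%MS == 0).
  apply/rowV0P => v; rewrite sub_capmx => /andP[/sub_kermxP vA /sub_kermxP vP].
  apply: H => //; exists ord0.
  move: vP => /matrixP /(_ 0 0); rewrite !mxE (bigD1 ord0) //= big1.
    by rewrite !mxE eqxx mulr1 addr0 => ->.
  by move=> j /negbTE nj; rewrite !mxE nj mulr0.
have := mxrank_mul_ker (kermx A) P.
rewrite (eqP h0) mxrank0 addn0 mxrank_ker => e.
have := rank_leq_col (kermx A *m P).
by rewrite e leq_subLR addnC.
Qed.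

Lemma rank_sum_le (k : fieldType) m n p (L : 'M[k]_(m,n)) (D : 'M[k]_(n,p)) :
  L *m D = 0 -> (\rank L + \rank D <= n)%N.
Proof.
move=> LD; have : (L <= kermx D)%MS by apply/sub_kermxP.
move/mxrankS; rewrite mxrank_ker => h.
have := rank_leq_row D.
move=> hD; apply: (leq_trans (leq_add h (leqnn _))).
by rewrite subnK.
Qed.

Lemma two_le_count (I : finType) (P : pred I) a b :
  P a -> P b -> a != b -> (2 <= \sum_(t | P t) 1)%N.
Proof.
move=> Pa Pb ab; rewrite (bigD1 a) //= (bigD1 b) //=; last by rewrite Pb eq_sym.

Qed.

Lemma count_ge2 (k : fieldType) (T : finType) (Y : T -> k) :
  \sum_v Y v = 0 -> forall v1, Y v1 != 0 ->
  exists2 v2, v2 != v1 & Y v2 != 0.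
Proof.
move=> S0 v1 Y1.
case: (boolP [exists v, (v != v1) && (Y v != 0)]).
  by move/existsP=> [v /andP[h1 h2]]; exists v.
move/existsPn => H; exfalso; move: S0; rewrite (bigD1 v1) //= big1 ?addr0.
  by move/eqP; rewrite (negbTE Y1).
by move=> v vv1; have := H v; rewrite vv1 /= negbK => /eqP.
Qed.

Section Main.
Variables (k : fieldType) (T : finType) (c : T -> nat) (W : {set T})
          (Y : T -> T -> T -> k).
Hypothesis Ysupp : forall v x u, Y v x u != 0 ->
  [/\ c v = 0%N, c x = 1%N, c u = 2%N & [/\ v \in W, x \in W & u \in W]].
Hypothesis Yu : forall v x, \sum_u Y v x u = 0.
Hypothesis Yx : forall v u, \sum_x Y v x u = 0.
Hypothesis Yv : forall x u, \sum_v Y v x u = 0.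
Hypothesis Ycov : forall w, w \in W -> exists v x u,
  Y v x u != 0 /\ [|| w == v, w == x | w == u].
Hypothesis Ymin : forall g : T -> T -> T -> k,
   (forall v x, \sum_u g v x u * Y v x u = 0) ->
   (forall v u, \sum_x g v x u * Y v x u = 0) ->
   (forall x u, \sum_v g v x u * Y v x u = 0) ->
   (exists2 w, w \in W & forall v x u, [|| w == v, w == x | w == u] ->
        g v x u * Y v x u = 0) ->
   forall v x u, g v x u * Y v x u = 0.

Let W0 := W :&: [set w | c w == 0%N].
Let W12 := W :\: [set w | c w == 0%N].
Let E := [set p : T * T | [exists v, Y v p.1 p.2 != 0]].

Lemma YE v x u : Y v x u != 0 -> (x, u) \in E.
Proof. by move=> h; rewrite inE; apply/existsP; exists v. Qed.

Definition Lm : 'M[k]_(#|W0|, #|E|) :=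
  \matrix_(i, j) Y (enum_val i) (enum_val j).1 (enum_val j).2.
Definition Dm : 'M[k]_(#|E|, #|W12|) :=
  \matrix_(j, i) ((enum_val i == (enum_val j).1)%:R - (enum_val i == (enum_val j).2)%:R).

Lemma sumE (F : T * T -> k) : (forall p, p \notin E -> F p = 0) ->
  \sum_(j < #|E|) F (enum_val j) = \sum_x \sum_u F (x, u).
Proof.
move=> HF; rewrite -(big_enum_val (A := mem E)) /= pair_big /=.
rewrite [RHS](bigID (fun p => p \in E)) /= [X in _ + X]big1 ?addr0.
  by apply: eq_bigr => -[].
by move=> [x u] /HF ->.
Qed.

Lemma LD0 : Lm *m Dm = 0.
Proof.
apply/matrixP => i i'; rewrite !mxE.
set v := enum_val i; set w := enum_val i'.
rewrite (eq_bigr (fun j => (fun p => Y v p.1 p.2 * ((w == p.1)%:R - (w == p.2)%:R))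
   (enum_val j))); last by move=> j _; rewrite !mxE.
rewrite (@sumE (fun p => Y v p.1 p.2 * ((w == p.1)%:R - (w == p.2)%:R))) /=; last first.
  move=> p pE; case: (eqVneq (Y v p.1 p.2) 0) => [->|h]; first by rewrite mul0r.
  by move: pE; case: p h => x u h; rewrite (YE h).
under eq_bigr do under eq_bigr do rewrite mulrBr.
under eq_bigr do rewrite sumrB.
rewrite sumrB.
rewrite (eq_bigr (fun x => (w == x)%:R * \sum_u Y v x u)); last first.
  by move=> x _; rewrite mulr_sumr; apply: eq_bigr => u _; rewrite mulrC.
rewrite exchange_big /=.
rewrite [X in _ - X]big1 ?subr0; last first.
  by move=> x _; rewrite -mulr_suml Yx mul0r.
by rewrite big1 // => x _; rewrite Yu mulr0.
Qed.

Lemma suppW0 v x u : Y v x u != 0 -> v \in W0.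
Proof. by move=> /Ysupp[cv _ _ [vW _ _]]; rewrite in_setI vW inE cv. Qed.

Lemma rankL : (#|W0| <= \rank Lm + 1)%N.
Proof.
apply: rank_lb => a aL [i0 ai0].
pose a' w := \sum_i (enum_val i == w)%:R * a 0 i.
have a'E i : a' (enum_val i) = a 0 i.
  rewrite /a' (bigD1 i) //= eqxx mul1r big1 ?addr0 // => j ji.
  by rewrite (inj_eq enum_val_inj) (negbTE ji) mul0r.
have H1 x u : \sum_v a' v * Y v x u = 0.
  case: (boolP ((x,u) \in E)) => xuE; last first.
    apply: big1 => v _; case: (eqVneq (Y v x u) 0) => [->|h]; first by rewrite mulr0.
    by rewrite (YE h) in xuE.
  pose jj : 'I_#|E| := @enum_rank_in _ (x,u) E xuE (x,u).
  have ej : enum_val jj = (x,u) by apply: enum_rankK_in.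
  have := aL; move/matrixP/(_ 0 jj); rewrite !mxE => h.
  rewrite -[RHS]h.
  rewrite (bigID (mem W0)) /= [X in _ + X]big1 ?addr0; last first.
    move=> v vW; case: (eqVneq (Y v x u) 0) => [->|hY]; first by rewrite mulr0.
    by rewrite (suppW0 hY) in vW.
  rewrite (big_enum_val (A := mem W0)) /=.
  by apply: eq_bigr => i _; rewrite mxE ej a'E.
have HM := @Ymin (fun v x u => a' v).
have Z v x u : a' v * Y v x u = 0.
  apply: HM => //.
  - by move=> v' x'; rewrite -mulr_sumr Yu mulr0.
  - by move=> v' u'; rewrite -mulr_sumr Yx mulr0.
  - exists (enum_val i0).
      by have := enum_valP i0; rewrite in_setI => /andP[].
    move=> v' x' u' hw; case: (eqVneq (Y v' x' u') 0) => [->|h]; first by rewrite mulr0.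
    have [cv cx cu _] := Ysupp h.
    have := enum_valP i0; rewrite in_setI inE => /andP[_ /eqP cw].
    case/or3P: hw => /eqP e.
    + by rewrite -e a'E ai0 mul0r.
    + by rewrite -e cw in cx.
    + by rewrite -e cw in cu.
apply/rowP => i; rewrite mxE -a'E.
have wW : enum_val i \in W by have := enum_valP i; rewrite in_setI => /andP[].
have [v [x [u [hY hw]]]] := Ycov wW.
have [cv cx cu _] := Ysupp hY.
have := enum_valP i; rewrite in_setI inE => /andP[_ /eqP cw].
case/or3P: hw => /eqP e; last first.
- by rewrite e cu in cw.
- by rewrite e cx in cw.
have := Z v x u; rewrite e => /eqP; rewrite mulf_eq0 (negbTE hY) orbF => /eqP //.
Qed.

Lemma rankD : (#|W12| <= \rank Dm + 1)%N.
Proof.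
rewrite -mxrank_tr; apply: rank_lb => f fD [i0 fi0].
pose f' w := \sum_i (enum_val i == w)%:R * f 0 i.
have f'E i : f' (enum_val i) = f 0 i.
  rewrite /f' (bigD1 i) //= eqxx mul1r big1 ?addr0 // => j ji.
  by rewrite (inj_eq enum_val_inj) (negbTE ji) mul0r.
have Hedge p : p \in E -> f' p.1 = f' p.2.
  move=> pE.
  pose jj : 'I_#|E| := @enum_rank_in _ p E pE p.
  have ej : enum_val jj = p by apply: enum_rankK_in.
  have := fD; move/matrixP/(_ 0 jj); rewrite !mxE => h.
  apply/eqP; rewrite -subr_eq0; apply/eqP; rewrite -[RHS]h /f' -sumrB.
  by apply: eq_bigr => i _; rewrite !mxE ej mulrBr !(mulrC (f 0 i)).
have Hxu v x u : Y v x u != 0 -> f' x = f' u.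
  by move=> h; apply: (Hedge (x,u)); apply: YE h.
have HM := @Ymin (fun v x u => f' x).
have Z v x u : f' x * Y v x u = 0.
  apply: HM => //.
  - by move=> v' x'; rewrite -mulr_sumr Yu mulr0.
  - move=> v' u'; rewrite (eq_bigr (fun x => f' u' * Y v' x u')).
      by rewrite -mulr_sumr Yx mulr0.
    move=> x' _; case: (eqVneq (Y v' x' u') 0) => [->|h]; first by rewrite !mulr0.
    by rewrite (Hxu _ _ _ h).
  - by move=> x' u'; rewrite -mulr_sumr Yv mulr0.
  - exists (enum_val i0).
      by have := enum_valP i0; rewrite in_setD => /andP[].
    move=> v' x' u' hw; case: (eqVneq (Y v' x' u') 0) => [->|h]; first by rewrite mulr0.
    have [cv cx cu _] := Ysupp h.
    have := enum_valP i0; rewrite in_setD inE => /andP[cw _].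
    case/or3P: hw => /eqP e.
    + by rewrite e cv in cw.
    + by rewrite -e f'E fi0 mul0r.
    + by rewrite (Hxu _ _ _ h) -e f'E fi0 mul0r.
apply/rowP => i; rewrite mxE -f'E.
have wW : enum_val i \in W by have := enum_valP i; rewrite in_setD => /andP[].
have [v [x [u [hY hw]]]] := Ycov wW.
have [cv cx cu _] := Ysupp hY.
have := enum_valP i; rewrite in_setD inE => /andP[cw _].
have fx : f' x = 0.
  by have := Z v x u; move/eqP; rewrite mulf_eq0 (negbTE hY) orbF => /eqP.
case/or3P: hw => /eqP e.
- by rewrite e cv in cw.
- by rewrite e.
- by rewrite e -(Hxu _ _ _ hY).
Qed.

Lemma countS : (2 * #|E| <= #|[set t : T * (T * T) | (Y t.1 t.2.1 t.2.2 != 0)%R]|)%N.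
Proof.
set S := [set t : T * (T * T) | _].
rewrite -[X in (_ <= X)%N]sum1_card (partition_big (fun t : T * (T * T) => t.2) (mem E)) /=; last first.
  by move=> [v [x u]]; rewrite inE /= => h; apply: YE h.
rewrite mulnC -sum_nat_const; apply: leq_sum => p pE.
have := pE; rewrite inE => /existsP[v1 h1].
have [v2 v21 h2] := count_ge2 (Yv p.1 p.2) h1.
apply: (@two_le_count _ _ (v1, p) (v2, p)).
- by rewrite inE /= h1 eqxx.
- by rewrite inE /= h2 eqxx.
- by rewrite xpair_eqE negb_and eq_sym v21.
Qed.

Lemma main_count : (2 * #|W| - 4 <= #|[set t : T * (T * T) | (Y t.1 t.2.1 t.2.2 != 0)%R]|)%N.
Proof.
have hW : #|W| = (#|W0| + #|W12|)%N by rewrite cardsID.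
have h1 := rankL. have h2 := rankD. have h3 := rank_sum_le LD0. have h4 := countS.
rewrite hW; move: h1 h2 h3 h4.
set a := #|W0|; set b := #|W12|; set r1 := \rank Lm; set r2 := \rank Dm; set m := #|E|.
set s := #|_|.
move=> /leP h1 /leP h2 /leP h3 /leP h4; apply/leP.
rewrite -?plusE -?minusE -?multE in h1 h2 h3 h4 *. lia.
Qed.

End Main.

Section Tri.
Variables (k : fieldType) (T : finType).

Definition rk (w : T) : nat := enum_rank w.

Lemma rk_inj : injective rk.
Proof. by move=> a b /val_inj /enum_rank_inj. Qed.

Lemma sum3 (F : T -> k) v x u : v != x -> v != u -> x != u ->
  \sum_(w in [set v; x; u]) F w = F v + F x + F u.
Proof.
move=> vx vu xu.
rewrite -setUA big_setU1 /=; last by rewrite !inE negb_or vx vu.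
by rewrite big_setU1 ?inE //= big_set1 addrA.
Qed.

Lemma card3 (P : pred T) v x u : v != x -> v != u -> x != u ->
  #|[set w in [set v; x; u] | P w]| = (P v + P x + P u)%N.
Proof.
move=> vx vu xu.
rewrite -sum1_card (eq_bigl (fun w => (w \in [set v; x; u]) && P w)); last first.
  by move=> w; rewrite !inE.
rewrite big_mkcondr /= -setUA big_setU1 /=; last by rewrite !inE negb_or vx vu.
rewrite big_setU1 /=; last by rewrite !inE.
by rewrite big_set1 addnA; case: (P v); case: (P x); case: (P u).
Qed.

Lemma setD3a (v x u : T) : v != x -> v != u -> [set v; x; u] :\ v = [set x; u].
Proof.
move=> vx vu; apply/setP => y; rewrite !inE.
by case: (eqVneq y v) => [->|]; rewrite ?(negbTE vx) ?(negbTE vu) ?andbT.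
Qed.

Lemma setD3b (v x u : T) : x != v -> x != u -> [set v; x; u] :\ x = [set v; u].
Proof.
move=> vx vu; apply/setP => y; rewrite !inE.
by case: (eqVneq y x) => [->|]; rewrite ?(negbTE vx) ?(negbTE vu) ?andbT ?orbF.
Qed.

Lemma setD3c (v x u : T) : u != v -> u != x -> [set v; x; u] :\ u = [set v; x].
Proof.
move=> vx vu; apply/setP => y; rewrite !inE.
by case: (eqVneq y u) => [->|]; rewrite ?(negbTE vx) ?(negbTE vu) ?andbT ?orbF.
Qed.

Lemma bcoef3 v x u tau : v != x -> v != u -> x != u ->
  bcoef k [set v; x; u] tau =
    (tau == [set x; u])%:R * (-1) ^+ ((rk x < rk v) + (rk u < rk v))%N
  + (tau == [set v; u])%:R * (-1) ^+ ((rk v < rk x) + (rk u < rk x))%N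
  + (tau == [set v; x])%:R * (-1) ^+ ((rk v < rk u) + (rk x < rk u))%N.
Proof.
move=> vx vu xu; rewrite /bcoef big_mkcondr sum3 //.
have xv : x != v by rewrite eq_sym.
have uv : u != v by rewrite eq_sym.
have ux : u != x by rewrite eq_sym.
rewrite (setD3a vx vu) (setD3b xv xu) (setD3c uv ux) !card3 // !ltnn /= !add0n !addn0.
by rewrite /rk; case: (tau == _); case: (tau == _); case: (tau == _);
  rewrite ?mul1r ?mul0r ?addr0 ?add0r.
Qed.
Definition sgn (v x u : T) : k :=
  (-1) ^+ ((rk x < rk v) + (rk u < rk v) + (rk u < rk x))%N.
Definition Kf (v x u : T) (tau : {set T}) : k :=
    (tau == [set x; u])%:R * (-1) ^+ (rk u < rk x)%N
  + (tau == [set v; u])%:R * - (-1) ^+ (rk u < rk v)%N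
  + (tau == [set v; x])%:R * (-1) ^+ (rk x < rk v)%N.

Lemma ltn_neg (a b : T) : a != b -> (rk b < rk a)%N = ~~ (rk a < rk b)%N.
Proof.
move=> ab; rewrite -leqNgt ltn_neqAle.
have -> : (rk b != rk a) by apply: contra ab => /eqP/rk_inj ->.
done.
Qed.

Lemma sgn_sq v x u : sgn v x u * sgn v x u = 1.
Proof. by rewrite /sgn -signr_odd; case: (odd _); rewrite /= ?expr1 ?expr0 ?mulrNN mulr1. Qed.

Lemma sign_alg (b1 b2 b3 : bool) (a1 a2 a3 : k) :
  a1 * (-1) ^+ (b1 + b2)%N + a2 * (-1) ^+ ((~~ b1) + b3)%N + a3 * (-1) ^+ ((~~ b2) + (~~ b3))%N
  = (-1) ^+ (b1 + b2 + b3)%N * (a1 * (-1) ^+ b3 + a2 * - (-1) ^+ b2 + a3 * (-1) ^+ b1).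
Proof.
case: b1; case: b2; case: b3; rewrite /= ?exprS ?expr0 ?mulN1r ?mul1r ?mulr1 ?opprK ?mulrN ?mulr1 ?opprD ?opprK; rewrite ?mul1r ?mulN1r ?opprD ?opprK //.
Qed.

Lemma bcoef3s v x u tau : v != x -> v != u -> x != u ->
  bcoef k [set v; x; u] tau = sgn v x u * Kf v x u tau.
Proof.
move=> vx vu xu; rewrite bcoef3 // /sgn /Kf.
have xv : x != v by rewrite eq_sym.
have uv : u != v by rewrite eq_sym.
have ux : u != x by rewrite eq_sym.
rewrite (ltn_neg xv) (ltn_neg uv) (ltn_neg ux).
exact: sign_alg.
Qed.
End Tri.

Section Chains.
Variables (k : fieldType) (T : finType).

Lemma chains_supp (G' : {set {set T}}) s (v : 'rV[k]_(NS T)) j :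
  (v <= chains k G' s)%MS -> v 0 j != 0 ->
  (enum_val j \in G') && (#|enum_val j| == s).
Proof.
case/submxP => w ->; rewrite mxE (bigD1 j) //= big1 ?addr0.
  by rewrite mxE eqxx /=; case: ifP => //; rewrite mulr0 eqxx.
by move=> i /negbTE ij; rewrite mxE ij /= mulr0.
Qed.

Lemma chains_in (G' : {set {set T}}) s (v : 'rV[k]_(NS T)) :
  (forall j, v 0 j != 0 -> (enum_val j \in G') && (#|enum_val j| == s)) ->
  (v <= chains k G' s)%MS.
Proof.
move=> H; have -> : v = v *m chains k G' s.
  apply/rowP => j; rewrite mxE (bigD1 j) //= big1 ?addr0.
    rewrite mxE eqxx /=; case: (eqVneq (v 0 j) 0) => [->|h]; first by rewrite mul0r.
    by rewrite (H _ h) mulr1.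
  by move=> i /negbTE ij; rewrite mxE ij /= mulr0.
exact: submxMl.
Qed.

Lemma chains4_0 (G' : {set {set T}}) :
  (forall F, F \in G' -> (#|F| <= 3)%N) -> chains k G' 4 = 0.
Proof.
move=> H; apply/matrixP => i j; rewrite !mxE.
case: (i == j) => //=; case: ifP => // /andP[/H h /eqP e].
by rewrite e in h.
Qed.

Lemma bdry_entry (v : 'rV[k]_(NS T)) tau :
  (v *m bdry T k) 0 (enum_rank tau) =
  \sum_(s : {set T}) v 0 (enum_rank s) * bcoef k s tau.
Proof.
rewrite mxE (reindex (@enum_rank _)) /=; last first.
  by apply: onW_bij; apply: enum_rank_bij.
by apply: eq_bigr => s _; rewrite mxE !enum_rankK.
Qed.
End Chains.

Section Iface.
Variables (k : fieldType) (T : finType) (G : {set {set T}}) (W : {set T})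
  (c : T -> 'I_3).
Hypothesis Hbal : forall F, F \in G -> {in F &, injective c}.
Hypothesis Hdim : forall F, F \in G -> (#|F| <= 3)%N.
Variable z : 'rV[k]_(NS T).
Hypothesis zC : (z <= chains k (induced G W) 3)%MS.
Hypothesis zB : z *m bdry T k = 0.
Hypothesis z0 : z != 0.
Hypothesis Hmin : forall W' : {set T}, W' \proper W -> forall z' : 'rV[k]_(NS T),
  (z' <= chains k (induced G W') 3)%MS -> z' *m bdry T k = 0 -> z' = 0.

Definition zf (s : {set T}) := z 0 (enum_rank s).
Definition cn (w : T) : nat := c w.
Definition valid (v x u : T) := [&& cn v == 0, cn x == 1 & cn u == 2]%N.
Definition Y (v x u : T) : k := if valid v x u then zf [set v; x; u] * sgn k v x u else 0.

Lemma zsupp s : zf s != 0 -> [/\ s \in G, s \subset W & #|s| = 3%N].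
Proof.
move=> h; have := chains_supp zC h; rewrite enum_rankK inE => /andP[/andP[sG sW] /eqP ->].
by [].
Qed.

Lemma valid_neq v x u : valid v x u -> [/\ v != x, v != u & x != u].
Proof.
case/and3P=> /eqP cv /eqP cx /eqP cu; split; apply/eqP => e; subst.
- by rewrite cv in cx.
- by rewrite cv in cu.
- by rewrite cx in cu.
Qed.

Lemma cn_lt w : (cn w < 3)%N. Proof. exact: ltn_ord. Qed.

Lemma tri_exists s : zf s != 0 -> exists v x u, valid v x u /\ s = [set v; x; u].
Proof.
move=> h; have [sG sW s3] := zsupp h.
have inj := Hbal sG.
have im : c @: s = setT.
  apply/eqP; rewrite eqEcard subsetT /= cardsT card_ord card_in_imset //.
  by rewrite s3.
have getc (i : 'I_3) : exists2 w, w \in s & cn w = i.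
  have : i \in c @: s by rewrite im inE.
  by case/imsetP => w ws ->; exists w.
have [v vs cv] := getc (@Ordinal 3 0 isT).
have [x xs cx] := getc (@Ordinal 3 1 isT).
have [u us cu] := getc (@Ordinal 3 2 isT).
exists v, x, u; split; first by rewrite /valid cv cx cu.
apply/eqP; rewrite eqEsubset; apply/andP; split; last first.
  by apply/subsetP => y; rewrite !inE => /orP[/orP[]|] /eqP ->.
apply/subsetP => y ys; rewrite !inE.
have cy := cn_lt y.
have ec (a : T) : a \in s -> cn y = cn a -> y = a.
  by move=> as_ e; apply: inj => //; apply: val_inj.
have e0 := ec v vs; have e1 := ec x xs; have e2 := ec u us.
rewrite cv in e0; rewrite cx in e1; rewrite cu in e2.
move: cy e0 e1 e2.
case: (cn y) => [|[|[|n]]] //= _ h1 h2 h3.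
- by rewrite h1 // eqxx.
- by rewrite h2 // eqxx orbT.
- by rewrite h3 // eqxx orbT.
Qed.

Lemma tri_uniq v x u v' x' u' : valid v x u -> valid v' x' u' ->
  [set v; x; u] = [set v'; x'; u'] -> [/\ v = v', x = x' & u = u'].
Proof.
move=> /and3P[/eqP cv /eqP cx /eqP cu] /and3P[/eqP cv' /eqP cx' /eqP cu'] e.
have m (a : T) : a \in [set v; x; u] -> a \in [set v'; x'; u'] by rewrite e.
have := m v; have := m x; have := m u; rewrite !inE !eqxx ?orbT /=.
move=> /(_ isT) hu /(_ isT) hx /(_ isT) hv.
split.
- by case/orP: hv => [/orP[]|] /eqP // e'; move: cv; rewrite e' ?cx' ?cu'.
- by case/orP: hx => [/orP[]|] /eqP // e'; move: cx; rewrite e' ?cv' ?cu'.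
- by case/orP: hu => [/orP[]|] /eqP // e'; move: cu; rewrite e' ?cv' ?cx'.
Qed.

Definition validt (t : T * (T * T)) := valid t.1 t.2.1 t.2.2.
Definition trit (t : T * (T * T)) : {set T} := [set t.1; t.2.1; t.2.2].

Lemma trit_uniq t t' : validt t -> validt t' -> trit t = trit t' -> t = t'.
Proof.
case: t => v [x u]; case: t' => v' [x' u'] h h' e.
have [e1 e2 e3] := tri_uniq h h' e.
by rewrite /= in e1 e2 e3; rewrite e1 e2 e3.
Qed.

Lemma reindex3 (F : {set T} -> k) : (forall s, F s != 0 -> zf s != 0) ->
  \sum_s F s = \sum_(t : T * (T * T)) (if validt t then F (trit t) else 0).
Proof.
move=> hF; symmetry.
rewrite (partition_big trit xpredT) //=.
apply: eq_bigr => s _.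
case: (eqVneq (F s) 0) => [Fs|Fs].
  rewrite big1 // => t /eqP ts; rewrite ts Fs; by case: ifP.
have [v [x [u [vt e]]]] := tri_exists (hF _ Fs).
rewrite (bigD1 (v,(x,u))) /=; last by rewrite /trit /= e.
rewrite /validt /= vt /trit /= -e big1 ?addr0 // => t /andP[/eqP ts tn].
case: ifP => // vt'; exfalso; move/negP: tn; apply.
by apply/eqP; apply: trit_uniq => //; rewrite /trit /= ts ?e.
Qed.

Lemma sum_triple (F : T * (T * T) -> k) :
  \sum_t F t = \sum_v \sum_x \sum_u F (v, (x, u)).
Proof.
transitivity (\sum_t F (t.1, t.2)); first by apply: eq_bigr => -[].
rewrite -(pair_bigA _ (fun v p => F (v, p))); apply: eq_bigr => v _.
transitivity (\sum_(p : T * T) F (v, (p.1, p.2))); first by apply: eq_bigr => -[].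
by rewrite -(pair_bigA _ (fun x u => F (v, (x, u)))).
Qed.

Section G.
Variable g : T -> T -> T -> k.
Definition hg (s : {set T}) : k :=
  \sum_(t : T * (T * T)) (if validt t && (trit t == s) then g t.1 t.2.1 t.2.2 else 0).

Lemma hg_tri v x u : valid v x u -> hg [set v; x; u] = g v x u.
Proof.
move=> vt; rewrite /hg (bigD1 (v,(x,u))) /=; last by [].
rewrite /validt /= vt /trit /= eqxx big1 ?addr0 // => t tn.
case: ifP => // /andP[vt' /eqP ts]; exfalso; move/negP: tn; apply.
by apply/eqP; apply: trit_uniq.
Qed.

Lemma GF tau :
  \sum_s (hg s * zf s) * bcoef k s tau =
  \sum_(t : T * (T * T)) g t.1 t.2.1 t.2.2 * Y t.1 t.2.1 t.2.2 * Kf k t.1 t.2.1 t.2.2 tau.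
Proof.
rewrite (reindex3 (F := fun s => (hg s * zf s) * bcoef k s tau)); last first.
  by move=> s; rewrite !mulf_eq0 !negb_or => /andP[/andP[_ h] _].
apply: eq_bigr => -[v [x u]] _; rewrite /validt /Y /=.
case: ifP => vt; last by rewrite mulr0 mul0r.
have [vx vu xu] := valid_neq vt.
rewrite /trit /= hg_tri // bcoef3s //.
by rewrite -!mulrA; congr (_ * _); rewrite mulrCA !mulrA.
Qed.
End G.

Lemma set2_eqc a b a' b' : cn a = cn a' -> cn b = cn b' -> cn a != cn b ->
  ([set a; b] == [set a'; b']) = (a == a') && (b == b').
Proof.
move=> ea eb ab; apply/eqP/andP => [e|[/eqP -> /eqP ->]] //.
have ha : a \in [set a'; b'] by rewrite -e !inE eqxx.
have hb : b \in [set a'; b'] by rewrite -e !inE eqxx orbT.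
move: ha hb; rewrite !inE => ha hb; split.
- case/orP: ha => [//|/eqP ha']; by move: ab; rewrite ha' -eb eqxx.
- case/orP: hb => [/eqP hb'|//]; by move: ab; rewrite hb' -ea eqxx.
Qed.

Lemma set2_neqb a b a' b' : cn b != cn a' -> cn b != cn b' ->
  ([set a; b] == [set a'; b']) = false.
Proof.
move=> h1 h2; apply/negbTE/eqP => e.
have : b \in [set a'; b'] by rewrite -e !inE eqxx orbT.
rewrite !inE => /orP[] /eqP hb; [by move: h1; rewrite hb eqxx | by move: h2; rewrite hb eqxx].
Qed.

Lemma set2_neqa a b a' b' : cn a != cn a' -> cn a != cn b' ->
  ([set a; b] == [set a'; b']) = false.
Proof.
move=> h1 h2; apply/negbTE/eqP => e.
have : a \in [set a'; b'] by rewrite -e !inE eqxx.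
rewrite !inE => /orP[] /eqP hb; [by move: h1; rewrite hb eqxx | by move: h2; rewrite hb eqxx].
Qed.

Lemma YK0 tau :
  \sum_(t : T * (T * T)) Y t.1 t.2.1 t.2.2 * Kf k t.1 t.2.1 t.2.2 tau = 0.
Proof.
have h0 := bdry_entry z tau; rewrite zB mxE in h0.
rewrite (eq_bigr (fun t => 1 * Y t.1 t.2.1 t.2.2 * Kf k t.1 t.2.1 t.2.2 tau)); last first.
  by move=> t _; rewrite mul1r.
have := GF (fun _ _ _ => 1) tau; rewrite /= => <-.
rewrite [RHS]h0; apply: eq_bigr => s _; rewrite /zf.
case: (eqVneq (z 0 (enum_rank s)) 0) => [->|h]; first by rewrite !mulr0 mul0r.
by have [v [x [u [vt ->]]]] := tri_exists h; rewrite hg_tri // mul1r.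
Qed.

Lemma Y_valid v x u : Y v x u != 0 -> valid v x u.
Proof. by rewrite /Y; case: ifP => //; rewrite eqxx. Qed.

Lemma pick_vx (H : T -> T -> T -> k) v x :
  \sum_v' \sum_x' \sum_u' (if (v' == v) && (x' == x) then H v' x' u' else 0)
  = \sum_u H v x u.
Proof.
rewrite (bigD1 v) //= [X in _ + X]big1 ?addr0; last first.
  by move=> v' /negbTE nv; apply: big1 => x' _; apply: big1 => u' _; rewrite nv.
rewrite (bigD1 x) //= [X in _ + X]big1 ?addr0; last first.
  by move=> x' /negbTE nx; apply: big1 => u' _; rewrite nx andbF.
by apply: eq_bigr => u _; rewrite !eqxx.
Qed.

Lemma pick_vu (H : T -> T -> T -> k) v u :
  \sum_v' \sum_x' \sum_u' (if (v' == v) && (u' == u) then H v' x' u' else 0)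
  = \sum_x H v x u.
Proof.
rewrite (bigD1 v) //= [X in _ + X]big1 ?addr0; last first.
  by move=> v' /negbTE nv; apply: big1 => x' _; apply: big1 => u' _; rewrite nv.
apply: eq_bigr => x _; rewrite (bigD1 u) //= [X in _ + X]big1 ?addr0 ?eqxx //.
by move=> u' /negbTE nu; rewrite nu andbF.
Qed.

Lemma pick_xu (H : T -> T -> T -> k) x u :
  \sum_v' \sum_x' \sum_u' (if (x' == x) && (u' == u) then H v' x' u' else 0)
  = \sum_v H v x u.
Proof.
apply: eq_bigr => v _.
rewrite (bigD1 x) //= [X in _ + X]big1 ?addr0; last first.
  by move=> x' /negbTE nx; apply: big1 => u' _; rewrite nx.
rewrite (bigD1 u) //= [X in _ + X]big1 ?addr0 ?eqxx //.
by move=> u' /negbTE nu; rewrite nu andbF.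
Qed.

Lemma Yu v x : \sum_u Y v x u = 0.
Proof.
case: (boolP ((cn v == 0) && (cn x == 1))%N) => h; last first.
  apply: big1 => u _; rewrite /Y /valid; case: ifP => // /and3P[a b _].
  by rewrite a b in h.
case/andP: h => /eqP cv /eqP cx.
have := YK0 [set v; x].
rewrite (eq_bigr (fun t => if (t.1 == v) && (t.2.1 == x) then
   Y t.1 t.2.1 t.2.2 * (-1) ^+ (rk x < rk v)%N else 0)); last first.
  move=> [v' [x' u']] _ /=.
  case: (eqVneq (Y v' x' u') 0) => [->|hY]; first by rewrite !mul0r; case: ifP.
  case/and3P: (Y_valid hY) => /eqP cv' /eqP cx' /eqP cu'.
  rewrite /Kf (@set2_neqa v x x' u') ?cv ?cx' ?cu' // (@set2_neqb v x v' u') ?cx ?cv' ?cu' //.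
  rewrite set2_eqc ?cv ?cx ?cv' ?cx' // !mul0r !add0r.
  case: (eqVneq v' v) => [->|nv]; case: (eqVneq x' x) => [->|nx];
    rewrite ?eqxx /= ?mul1r //; rewrite 1?eq_sym ?(negbTE nv) ?(negbTE nx) ?andbF ?mul0r ?mulr0 //.
rewrite sum_triple pick_vx -mulr_suml => /eqP; rewrite mulf_eq0 signr_eq0 orbF.
by move/eqP.
Qed.

Lemma Yx v u : \sum_x Y v x u = 0.
Proof.
case: (boolP ((cn v == 0) && (cn u == 2))%N) => h; last first.
  apply: big1 => x _; rewrite /Y /valid; case: ifP => // /and3P[a _ b].
  by rewrite a b in h.
case/andP: h => /eqP cv /eqP cu.
have := YK0 [set v; u].
rewrite (eq_bigr (fun t => if (t.1 == v) && (t.2.2 == u) then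
   Y t.1 t.2.1 t.2.2 * - (-1) ^+ (rk u < rk v)%N else 0)); last first.
  move=> [v' [x' u']] _ /=.
  case: (eqVneq (Y v' x' u') 0) => [->|hY]; first by rewrite !mul0r; case: ifP.
  case/and3P: (Y_valid hY) => /eqP cv' /eqP cx' /eqP cu'.
  rewrite /Kf (@set2_neqa v u x' u') ?cv ?cx' ?cu' // (@set2_neqb v u v' x') ?cu ?cv' ?cx' //.
  rewrite set2_eqc ?cv ?cu ?cv' ?cu' // !mul0r addr0 add0r.
  case: (eqVneq v' v) => [->|nv]; case: (eqVneq u' u) => [->|nu];
    rewrite ?eqxx /= ?mul1r //; rewrite 1?eq_sym ?(negbTE nv) ?(negbTE nu) ?andbF ?mul0r ?mulr0 //.
rewrite sum_triple pick_vu -mulr_suml => /eqP; rewrite mulf_eq0 oppr_eq0 signr_eq0 orbF.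
by move/eqP.
Qed.

Lemma Yv x u : \sum_v Y v x u = 0.
Proof.
case: (boolP ((cn x == 1) && (cn u == 2))%N) => h; last first.
  apply: big1 => v _; rewrite /Y /valid; case: ifP => // /and3P[_ a b].
  by rewrite a b in h.
case/andP: h => /eqP cx /eqP cu.
have := YK0 [set x; u].
rewrite (eq_bigr (fun t => if (t.2.1 == x) && (t.2.2 == u) then
   Y t.1 t.2.1 t.2.2 * (-1) ^+ (rk u < rk x)%N else 0)); last first.
  move=> [v' [x' u']] _ /=.
  case: (eqVneq (Y v' x' u') 0) => [->|hY]; first by rewrite !mul0r; case: ifP.
  case/and3P: (Y_valid hY) => /eqP cv' /eqP cx' /eqP cu'.
  rewrite /Kf (@set2_neqa x u v' u') ?cx ?cv' ?cu' // (@set2_neqb x u v' x') ?cu ?cv' ?cx' //.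
  rewrite set2_eqc ?cx ?cu ?cx' ?cu' // !mul0r !addr0.
  case: (eqVneq x' x) => [->|nx]; case: (eqVneq u' u) => [->|nu];
    rewrite ?eqxx /= ?mul1r //; rewrite 1?eq_sym ?(negbTE nx) ?(negbTE nu) ?andbF ?mul0r ?mulr0 //.
rewrite sum_triple pick_xu -mulr_suml => /eqP; rewrite mulf_eq0 signr_eq0 orbF.
by move/eqP.
Qed.

Lemma sgn_neq0 (v x u : T) : sgn k v x u != 0.
Proof. by apply/eqP => h; have := sgn_sq k v x u; rewrite h mul0r => /eqP; rewrite eq_sym oner_eq0. Qed.

Lemma Y_zf v x u : Y v x u != 0 -> zf [set v; x; u] != 0.
Proof. by rewrite /Y; case: ifP => _; rewrite ?eqxx // mulf_eq0 negb_or => /andP[]. Qed.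

Lemma Ysupp v x u : Y v x u != 0 ->
  [/\ cn v = 0, cn x = 1, cn u = 2 & [/\ v \in W, x \in W & u \in W]]%N.
Proof.
move=> h; case/and3P: (Y_valid h) => /eqP cv /eqP cx /eqP cu; split => //.
have [_ /subsetP sW _] := zsupp (Y_zf h).
by split; apply: sW; rewrite !inE eqxx ?orbT.
Qed.

Lemma sum_zero_u (H : T -> T -> T -> k) (A : T -> T -> k) :
  (forall v x, \sum_u H v x u = 0) ->
  \sum_(t : T * (T * T)) H t.1 t.2.1 t.2.2 * A t.1 t.2.1 = 0.
Proof.
move=> h; rewrite sum_triple /=; apply: big1 => v _; apply: big1 => x _.
by rewrite -mulr_suml h mul0r.
Qed.

Lemma sum_zero_x (H : T -> T -> T -> k) (A : T -> T -> k) :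
  (forall v u, \sum_x H v x u = 0) ->
  \sum_(t : T * (T * T)) H t.1 t.2.1 t.2.2 * A t.1 t.2.2 = 0.
Proof.
move=> h; rewrite sum_triple /=; apply: big1 => v _; rewrite exchange_big /=.
by apply: big1 => u _; rewrite -mulr_suml h mul0r.
Qed.

Lemma sum_zero_v (H : T -> T -> T -> k) (A : T -> T -> k) :
  (forall x u, \sum_v H v x u = 0) ->
  \sum_(t : T * (T * T)) H t.1 t.2.1 t.2.2 * A t.2.1 t.2.2 = 0.
Proof.
move=> h; rewrite sum_triple /= exchange_big /=; apply: big1 => x _.
rewrite exchange_big /=; apply: big1 => u _.
by rewrite -mulr_suml h mul0r.
Qed.

Lemma Ymin_l (g : T -> T -> T -> k) :
   (forall v x, \sum_u g v x u * Y v x u = 0) ->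
   (forall v u, \sum_x g v x u * Y v x u = 0) ->
   (forall x u, \sum_v g v x u * Y v x u = 0) ->
   (exists2 w, w \in W & forall v x u, [|| w == v, w == x | w == u] ->
        g v x u * Y v x u = 0) ->
   forall v x u, g v x u * Y v x u = 0.
Proof.
move=> gu gx gv [w wW hw].
pose z' : 'rV[k]_(NS T) := \row_j (hg g (enum_val j) * z 0 j).
have z'E s : z' 0 (enum_rank s) = hg g s * zf s by rewrite mxE enum_rankK.
have z'B : z' *m bdry T k = 0.
  apply/rowP => j; rewrite -(enum_valK j) bdry_entry mxE.
  rewrite (eq_bigr (fun s => (hg g s * zf s) * bcoef k s (enum_val j))); last first.
    by move=> s _; rewrite z'E.
  rewrite GF.
  pose H v x u := g v x u * Y v x u.
  rewrite (eq_bigr (fun t =>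
     H t.1 t.2.1 t.2.2 * ((enum_val j == [set t.2.1; t.2.2])%:R * (-1) ^+ (rk t.2.2 < rk t.2.1)%N)
   + H t.1 t.2.1 t.2.2 * ((enum_val j == [set t.1; t.2.2])%:R * - (-1) ^+ (rk t.2.2 < rk t.1)%N)
   + H t.1 t.2.1 t.2.2 * ((enum_val j == [set t.1; t.2.1])%:R * (-1) ^+ (rk t.2.1 < rk t.1)%N)));
    last by move=> t _; rewrite /H /Kf !mulrDr.
  rewrite !big_split /=.
  rewrite (@sum_zero_v H (fun x u => (enum_val j == [set x; u])%:R * (-1) ^+ (rk u < rk x)%N)) //.
  rewrite (@sum_zero_x H (fun v u => (enum_val j == [set v; u])%:R * - (-1) ^+ (rk u < rk v)%N)) //.
  rewrite (@sum_zero_u H (fun v x => (enum_val j == [set v; x])%:R * (-1) ^+ (rk x < rk v)%N)) //.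
  by rewrite !addr0.
have z'C : (z' <= chains k (induced G (W :\ w)) 3)%MS.
  apply: chains_in => j; rewrite mxE mulf_eq0 negb_or => /andP[hh hzj].
  have hzs : zf (enum_val j) != 0 by rewrite /zf enum_valK.
  have [sG sW s3] := zsupp hzs.
  have [v [x [u [vt es]]]] := tri_exists hzs.
  rewrite inE sG s3 eqxx andbT /=.
  apply/subsetP => y ys; rewrite in_setD1 (subsetP sW) // andbT.
  apply/negP => /eqP yw; move: hh; rewrite es hg_tri //.
  have : g v x u * Y v x u = 0.
    apply: hw; move: ys; rewrite es !inE yw => /orP[/orP[]|] ->; rewrite ?orbT //.
  rewrite /Y vt -es => /eqP; rewrite !mulf_eq0 (negbTE hzs) (negbTE (sgn_neq0 v x u)) !orbF.
  by move=> ->.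
have z'0 := Hmin (properD1 wW) z'C z'B.
move=> v x u; case: (eqVneq (Y v x u) 0) => [->|hY]; first by rewrite mulr0.
have vt := Y_valid hY; have hzs := Y_zf hY.
have := z'E [set v; x; u]; rewrite z'0 mxE hg_tri // => /esym/eqP.
by rewrite mulf_eq0 (negbTE hzs) orbF => /eqP ->; rewrite mul0r.
Qed.

Lemma Ynz : exists v x u, Y v x u != 0.
Proof.
case: (boolP [exists j, z 0 j != 0]) => [/existsP[j hj]|h]; last first.
  exfalso; move/negP: z0; apply; apply/eqP/rowP => j.
  by move/existsPn: h => /(_ j); rewrite negbK mxE => /eqP.
have hzs : zf (enum_val j) != 0 by rewrite /zf enum_valK.
have [v [x [u [vt es]]]] := tri_exists hzs.
exists v, x, u; rewrite /Y vt -es mulf_eq0 negb_or hzs.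
exact: sgn_neq0.
Qed.

Lemma Ycov w : w \in W -> exists v x u,
  Y v x u != 0 /\ [|| w == v, w == x | w == u].
Proof.
move=> wW.
case: (boolP [exists t : T * (T * T), (Y t.1 t.2.1 t.2.2 != 0) &&
    [|| w == t.1, w == t.2.1 | w == t.2.2]]) => [/existsP[[v [x u]] /andP[h1 h2]]|h].
  by exists v, x, u.
exfalso; have [v [x [u hY]]] := Ynz.
have := @Ymin_l (fun _ _ _ => 1).
move=> /(_ _ _ _ _ v x u); rewrite mul1r => H; move/eqP: hY; apply; apply: H.
- by move=> *; rewrite (eq_bigr _ (fun _ _ => mul1r _)) Yu.
- by move=> *; rewrite (eq_bigr _ (fun _ _ => mul1r _)) Yx.
- by move=> *; rewrite (eq_bigr _ (fun _ _ => mul1r _)) Yv.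
- exists w => // v' x' u' hw; rewrite mul1r.
  move/existsPn: h => /(_ (v', (x', u'))) /=; rewrite hw andbT negbK.
  by move/eqP.
Qed.

Lemma S_le_f2 :
  (#|[set t : T * (T * T) | (Y t.1 t.2.1 t.2.2 != 0)%R]| <= f2 (induced G W))%N.
Proof.
set S := [set t : T * (T * T) | _].
have inj : {in S &, injective trit}.
  move=> t t'; rewrite !inE => h h' e.
  by apply: trit_uniq => //; apply: Y_valid.
rewrite /f2 -(card_in_imset inj); apply: subset_leq_card.
apply/subsetP => F /imsetP[t tS ->].
move: tS; rewrite inE => /Y_zf => hz.
have [sG sW s3] := zsupp hz.
by rewrite !inE sG sW s3 eqxx.
Qed.
End Iface.

Theorem mainTheorem16 (k : fieldType) (T : finType) (G : {set {set T}})
    (W : {set T}) :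
  is_complex G -> is_two_dim G -> balanced G ->
  red_homology_nonzero k (induced G W) 2 ->
  (forall W' : {set T}, W' \proper W ->
     ~~ red_homology_nonzero k (induced G W') 2) ->
  (2 * #|W| - 4 <= f2 (induced G W))%N.
Proof.
move=> _ [_ Hdim] [c Hbal] Hnz H5.
have c4 W' : chains k (induced G W') 4 = 0.
  by apply: chains4_0 => F; rewrite inE => /andP[/Hdim].
move: Hnz; rewrite /red_homology_nonzero c4 mul0mx submx0 => /rowV0Pn[z zX z0].
move: zX; rewrite sub_capmx => /andP[zC /sub_kermxP zB].
have Hmin : forall W' : {set T}, W' \proper W -> forall z' : 'rV[k]_(NS T),
  (z' <= chains k (induced G W') 3)%MS -> z' *m bdry T k = 0 -> z' = 0.
  move=> W' hW' z' z'C z'B; have := H5 W' hW'.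
  rewrite /red_homology_nonzero negbK c4 mul0mx submx0 => /eqP X0.
  have : (z' <= chains k (induced G W') (2.+1) :&: kermx (bdry T k))%MS.
    by rewrite sub_capmx z'C; apply/sub_kermxP.
  by rewrite X0 submx0 => /eqP.
apply: leq_trans (main_count (Ysupp zC) (Yu Hbal zC zB) (Yx Hbal zC zB) (Yv Hbal zC zB)
  (Ycov Hbal zC zB z0 Hmin) (Ymin_l Hbal zC Hmin)) (S_le_f2 c zC).
Qed.
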